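(* Let $G=(V,E)$ be an undirected graph with positive edge weights, and let $p,v\in V$ be distinct. If a minimum $p,v$-cut $S$ with $v\in S$ (and $p\notin S$) satisfies $|E(\{p\},S)|>0.6\deg(p)$, then for all $v'\in (V\setminus S)\setminus\{p\}$ we have $\lambda_{p,v'}\le 0.8\,\lambda_{p,v}$.
   Context: $|E(A,B)|$ is the total weight of edges between node sets $A$ and $B$; $\deg(u)$ is the total weight of edges incident to $u$; $\lambda_{x,y}$ denotes the value (total weight of crossing edges) of a minimum $x,y$-cut in $G$. *)

(* Defs.v *)
From mathcomp Require Import all_boot all_order all_algebra.
Set Implicit Arguments. Unset Strict Implicit. Unset Printing Implicit Defensive.
Import Order.TTheory GRing.Theory Num.Theory.
Local Open Scope ring_scope.

(* A weighted undirected graph on a finite vertex type T is given by a weight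
   function w : T -> T -> R; {x,y} is an edge iff w x y > 0 (so all edge
   weights are positive), non-edges have weight 0. *)
Definition weighted_graph (R : realFieldType) (T : finType) (w : T -> T -> R) : Prop :=
  (forall x y, w x y = w y x) /\ (forall x, w x x = 0) /\ (forall x y, 0 <= w x y).

Definition Ew (R : realFieldType) (T : finType) (w : T -> T -> R) (A B : {set T}) : R :=
  \sum_(x in A) \sum_(y in B) w x y.

Definition degw (R : realFieldType) (T : finType) (w : T -> T -> R) (u : T) : R :=
  \sum_(y : T) w u y.

Definition cutval (R : realFieldType) (T : finType) (w : T -> T -> R) (S : {set T}) : R :=
  Ew w S (~: S).

(* S is an x,y-cut (written with y on the side S, as in the paper) *)
Definition is_cut (T : finType) (x y : T) (S : {set T}) : bool :=
  (y \in S) && (x \notin S).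

(* lambda_{x,y}: minimum value of an x,y-cut.  The fold starts at the value of
   the cut [set y], which is an x,y-cut whenever x != y. *)
Definition lambda (R : realFieldType) (T : finType) (w : T -> T -> R) (x y : T) : R :=
  \big[Num.min/cutval w [set y]]_(S : {set T} | is_cut x y S) cutval w S.

(* Main.v *)
Require Import Defs.
From mathcomp Require Import all_boot all_order all_algebra.
From mathcomp Require Import ring lra.
Import Order.TTheory GRing.Theory Num.Theory.
Local Open Scope ring_scope.

Section H.
Variables (R : realFieldType) (T : finType) (w : T -> T -> R).

Lemma EwUr (A B C : {set T}) : [disjoint B & C] ->
  Ew w A (B :|: C) = Ew w A B + Ew w A C.
Proof.
move=> d; rewrite /Ew -big_split; apply: eq_bigr => x _.
rewrite -bigU //; apply: eq_bigl => y; by rewrite !inE.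
Qed.

Lemma EwUl (A B C : {set T}) : [disjoint B & C] ->
  Ew w (B :|: C) A = Ew w B A + Ew w C A.
Proof.
move=> d; rewrite /Ew -bigU //; apply: eq_bigl => y; by rewrite !inE.
Qed.

Lemma EwC (A B : {set T}) : (forall x y, w x y = w y x) -> Ew w A B = Ew w B A.
Proof.
move=> sym; rewrite /Ew exchange_big; apply: eq_bigr => x _; apply: eq_bigr => y _.
exact: sym.
Qed.

Lemma lambda_le (x y : T) (S : {set T}) : is_cut x y S -> lambda w x y <= cutval w S.
Proof. move=> h; rewrite /lambda; exact: (bigmin_le_cond _ (fun S => cutval w S) h). Qed.

End H.

Theorem lemma4p5 (R : realFieldType) (T : finType) (w : T -> T -> R)
  (p v : T) (S : {set T}) :
  weighted_graph w -> p != v ->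
  is_cut p v S -> cutval w S = lambda w p v ->
  Ew w [set p] S > (3%:R / 5%:R) * degw w p ->
  forall v' : T, v' \in (~: S) :\ p ->
    lambda w p v' <= (4%:R / 5%:R) * lambda w p v.
Proof.
move=> [sym [w0 _]] _ /andP[vS pS] hl ha v' hv'.
set X := (~: S) :\ p.
have dSX : [disjoint S & X].
  rewrite -setI_eq0; apply/eqP; apply/setP => z; rewrite !inE; by case: (z \in S); rewrite ?andbF.
have dSp : [disjoint S & [set p]].
  rewrite -setI_eq0; apply/eqP; apply/setP => z; rewrite !inE; case: eqP => [->|_]; by rewrite ?(negbTE pS) ?andbF.
have dXp : [disjoint X & [set p]].
  rewrite -setI_eq0; apply/eqP; apply/setP => z; rewrite !inE; case: eqP => [->|_]; by rewrite ?andbF.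
have cS : ~: S = X :|: [set p].
  apply/setP => z; rewrite !inE; have [->|zp] := eqVneq z p; by rewrite ?pS ?orbT ?orbF.
have cX : ~: X = S :|: [set p].
  apply/setP => z; rewrite !inE; have [->|zp] := eqVneq z p; rewrite ?pS ?orbT ?orbF //=.
  by case: (z \in S).
have cSX : ~: (S :|: X) = [set p].
  apply/setP => z; rewrite !inE; have [->|zp] := eqVneq z p; rewrite ?(negbTE pS) ?orbT ?orbF //=.
  by case: (z \in S).
have h1 : lambda w p v' <= cutval w X.
  by apply: lambda_le; rewrite /is_cut hv' !inE eqxx.
have h2 : lambda w p v <= cutval w (S :|: X).
  by apply: lambda_le; rewrite /is_cut !inE vS eqxx (negbTE pS).
have Edeg : degw w p = Ew w [set p] S + Ew w [set p] X.
  have -> : degw w p = Ew w [set p] [set: T].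
    by rewrite /Ew big_set1; apply: eq_bigl => z; rewrite inE.
  have -> : [set: T] = [set p] :|: (S :|: X).
    by rewrite -cSX setUC setUCr.
  rewrite EwUr ?EwUr //; last by rewrite -setI_eq0 -cSX setIC setICr.
  by rewrite /Ew big_set1 big_set1 w0 add0r.
move: h1 h2 hl ha.
rewrite /cutval cS cX cSX !EwUr // EwUl // Edeg (@EwC _ _ w X S sym) (@EwC _ _ w S [set p] sym)
  (@EwC _ _ w X [set p] sym) => h1 h2 hl ha.
rewrite -hl in h2 *.
lra.
Qed.
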